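(* Let $\alpha>0$ and let $\mathit{rc}_\alpha$ be the rate of change function defined below. Then $\mathit{rc}_\alpha(x)<0$ for all $x\in(-1,1)$.
   Context: Let $\alpha>0$, $\varepsilon_\alpha=\frac{1}{4\alpha^2}$. The constant function $u\equiv\alpha$ solves the Helfrich Dirichlet problem $\frac{1}{u\sqrt{1+u'^2}}\frac{d}{dx}\bigl(\frac{u}{\sqrt{1+u'^2}}H'\bigr)+\frac12 H\bigl(\frac{u''}{(1+u'^2)^{3/2}}+\frac{1}{u\sqrt{1+u'^2}}\bigr)^2-2\varepsilon H=0$ in $(-1,1)$, $u(\pm1)=\alpha$, $u'(\pm1)=0$ (with $H=\frac12(\frac{1}{u\sqrt{1+u'^2}}-\frac{u''}{(1+u'^2)^{3/2}})$) for $\varepsilon=\varepsilon_\alpha$, and by the implicit function theorem there is a smooth family $(u_\varepsilon)$ of solutions for $\varepsilon$ near $\varepsilon_\alpha$ with $u_{\varepsilon_\alpha}\equiv\alpha$. The rate of change function is $\mathit{rc}_\alpha:=\frac{\partial u_\varepsilon}{\partial\varepsilon}\big|_{\varepsilon=\varepsilon_\alpha}$; equivalently, $\mathit{rc}_\alpha$ is the unique solution of $\mathit{rc}_\alpha^{(iv)}+\frac{1}{\alpha^4}\mathit{rc}_\alpha=-\frac{2}{\alpha}$ in $(-1,1)$, $\mathit{rc}_\alpha(\pm1)=\mathit{rc}_\alpha'(\pm1)=0$. *)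

(* Defs.v *)
From Stdlib Require Import Reals.
From Coquelicot Require Import Coquelicot.
Open Scope R_scope.

(* [is_rate_of_change alpha f]: f is a solution of the boundary value problem
     f'''' + f / alpha^4 = -2/alpha  in (-1,1),
     f(+-1) = 0,  f'(+-1) = 0,
   which (by the context) uniquely characterises rc_alpha. *)
Definition is_rate_of_change (alpha : R) (f : R -> R) : Prop :=
  (forall (k : nat) (x : R), (k <= 4)%nat -> -1 < x < 1 -> ex_derive_n f k x) /\
  (forall x : R, -1 < x < 1 ->
     Derive_n f 4 x + f x / alpha ^ 4 = - (2 / alpha)) /\
  f (-1) = 0 /\ f 1 = 0 /\
  filterlim f (at_right (-1)) (locally 0) /\
  filterlim f (at_left 1) (locally 0) /\
  filterlim (Derive f) (at_right (-1)) (locally 0) /\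
  filterlim (Derive f) (at_left 1) (locally 0).

(* Main.v *)
Require Import Defs.
From Stdlib Require Import Reals Lra Lia.
From Coquelicot Require Import Coquelicot.
Open Scope R_scope.
Definition ch (t:R) := (exp t + exp (-t))/2.
Definition sh (t:R) := (exp t - exp (-t))/2.
Definition Y (a A B p q x : R) := A*(ch(a*x)*cos(a*x)) + B*(sh(a*x)*sin(a*x)) + p*(ch(a*x)*sin(a*x)) + q*(sh(a*x)*cos(a*x)).

Lemma Y_der a A B p q x : is_derive (Y a A B p q) x (Y a (a*(p+q)) (a*(p-q)) (a*(B-A)) (a*(A+B)) x).
Proof. unfold Y, ch, sh. auto_derive. exact I. set (e1 := exp (a*x)). set (e2 := exp (-(a*x))). set (c := cos (a*x)). set (s := sin (a*x)). unfold Rdiv. ring. Qed.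

Lemma Y_cont a A B p q c t : continuous (fun y => Y a A B p q y - c) t.
Proof. apply (@ex_derive_continuous R_AbsRing R_NormedModule). unfold Y, ch, sh. auto_derive. exact I. Qed.

Lemma ch_neg t : ch (-t) = ch t.
Proof. unfold ch. rewrite Ropp_involutive. lra. Qed.
Lemma sh_neg t : sh (-t) = - sh t.
Proof. unfold sh. rewrite Ropp_involutive. field. Qed.
Lemma ch0 : ch 0 = 1.
Proof. unfold ch. rewrite Ropp_0, exp_0. field. Qed.
Lemma sh0 : sh 0 = 0.
Proof. unfold sh. rewrite Ropp_0, exp_0. field. Qed.
Lemma ch_plus x y : ch (x+y) = ch x * ch y + sh x * sh y.
Proof. unfold ch, sh. rewrite Ropp_plus_distr, !exp_plus. field. Qed.
Lemma sh_plus x y : sh (x+y) = sh x * ch y + ch x * sh y.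
Proof. unfold ch, sh. rewrite Ropp_plus_distr, !exp_plus. field. Qed.
Lemma ch2sh2 t : ch t ^ 2 - sh t ^ 2 = 1.
Proof. unfold ch, sh. assert (exp t * exp (-t) = 1) by (rewrite <- exp_plus, Rplus_opp_r, exp_0; auto).
 replace ((exp t + exp (- t)) / 2) with ((exp t + exp (- t)) * /2) by auto.
 replace ((exp t - exp (- t)) / 2) with ((exp t - exp (- t)) * /2) by auto. nra. Qed.

Lemma ch_gt1 t : 0 < t -> 1 < ch t.
Proof. intros Ht. unfold ch. rewrite exp_Ropp.
 assert (He : 1 < exp t) by (rewrite <- exp_0; apply exp_increasing; auto).
 assert (Hq : exp t + / exp t - 2 = (exp t - 1)^2 / exp t) by (field; lra).
 assert (0 < (exp t - 1)^2 / exp t). { apply Rdiv_lt_0_compat; [|lra]. apply pow_lt; lra. }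
 lra. Qed.

Lemma sh_gt_id t : 0 < t -> t < sh t.
Proof. intros Ht.
 destruct (MVT_cor2 (fun y => sh y - y) (fun y => ch y - 1) 0 t Ht) as [c [Hc Hc']].
 { intros c _. apply is_derive_Reals. unfold sh, ch. auto_derive. exact I.
   set (e1 := exp c). set (e2 := exp (-c)). unfold Rdiv; ring. }
 rewrite sh0 in Hc. assert (1 < ch c) by (apply ch_gt1; lra). nra. Qed.

Lemma sh_gt_abs_sin t : 0 < t -> Rabs (sin t) < sh t.
Proof. intros Ht. pose proof (sh_gt_id t Ht). unfold Rabs. destruct (Rcase_abs (sin t)) as [Hs|Hs].
 - destruct (Rlt_or_le t PI) as [Hp|Hp].
   + pose proof (sin_gt_0 t Ht Hp). lra.
   + pose proof PI2_1. pose proof (SIN_bound t). lra.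
 - pose proof (sin_lt_x t Ht). lra. Qed.

Lemma Y0 a A B p q : Y a A B p q 0 = A.
Proof. unfold Y. rewrite Rmult_0_r, ch0, sh0, cos_0, sin_0. ring. Qed.
Lemma Y1 a A B p q : Y a A B p q 1 = A*(ch a*cos a) + B*(sh a*sin a) + p*(ch a*sin a) + q*(sh a*cos a).
Proof. unfold Y. rewrite Rmult_1_r. ring. Qed.
Lemma Ym1 a A B p q : Y a A B p q (-1) = A*(ch a*cos a) + B*(sh a*sin a) - p*(ch a*sin a) - q*(sh a*cos a).
Proof. unfold Y. replace (a * -1) with (-a) by ring. rewrite ch_neg, sh_neg, cos_neg, sin_neg. ring. Qed.

Lemma lim_left1 (f G : R -> R) : (forall y, -1 < y < 1 -> f y = G y) -> continuous G 1 ->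
  filterlim f (at_left 1) (locally 0) -> G 1 = 0.
Proof. intros Heq Hc Hf.
 apply (@filterlim_locally_unique _ _ _ (at_left 1) (Proper_StrongProper _ (at_left_proper_filter 1)) G).
 - apply (filterlim_filter_le_1 (F := locally 1)); [|exact Hc].
   intros P [eps HP]. exists eps. intros y Hy _. apply HP. exact Hy.
 - apply (filterlim_ext_loc f); [|exact Hf].
   exists (mkposreal 1 Rlt_0_1). intros y Hy Hy1. apply Heq.
   unfold ball in Hy; simpl in Hy; unfold AbsRing_ball, abs, minus, plus, opp in Hy; simpl in Hy.
   apply Rabs_lt_between in Hy. lra.
Qed.
Lemma lim_rightm1 (f G : R -> R) : (forall y, -1 < y < 1 -> f y = G y) -> continuous G (-1) ->
  filterlim f (at_right (-1)) (locally 0) -> G (-1) = 0.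
Proof. intros Heq Hc Hf.
 apply (@filterlim_locally_unique _ _ _ (at_right (-1)) (Proper_StrongProper _ (at_right_proper_filter (-1))) G).
 - apply (filterlim_filter_le_1 (F := locally (-1))); [|exact Hc].
   intros P [eps HP]. exists eps. intros y Hy _. apply HP. exact Hy.
 - apply (filterlim_ext_loc f); [|exact Hf].
   exists (mkposreal 1 Rlt_0_1). intros y Hy Hy1. apply Heq.
   unfold ball in Hy; simpl in Hy; unfold AbsRing_ball, abs, minus, plus, opp in Hy; simpl in Hy.
   apply Rabs_lt_between in Hy. lra.
Qed.
Lemma key_ineq a x : 0 < a -> -1 < x < 1 ->
 (ch a*sin a + sh a*cos a)*(ch(a*x)*cos(a*x)) + (ch a*sin a - sh a*cos a)*(sh(a*x)*sin(a*x)) - (sin a*cos a + ch a*sh a) < 0.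
Proof.
 intros Ha Hx.
 assert (Hu : 0 < a + a*x) by nra. assert (Hv : 0 < a + -(a*x)) by nra.
 pose proof (sh_gt_id _ Hu). pose proof (sh_gt_id _ Hv).
 pose proof (sin_lt_x _ Hu). pose proof (sin_lt_x _ Hv).
 pose proof (ch_gt1 _ Hu). pose proof (ch_gt1 _ Hv).
 pose proof (COS_bound (a + a*x)). pose proof (COS_bound (a + -(a*x))).
 assert (P1 : 0 < (sh (a + a*x) - sin (a + a*x)) * (ch (a + -(a*x)) - cos (a + -(a*x)))) by (apply Rmult_lt_0_compat; lra).
 assert (P2 : 0 < (sh (a + -(a*x)) - sin (a + -(a*x))) * (ch (a + a*x) - cos (a + a*x))) by (apply Rmult_lt_0_compat; lra).
 revert P1 P2.
 rewrite !sh_plus, !ch_plus, !sin_plus, !cos_plus, ch_neg, sh_neg, sin_neg, cos_neg.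
 pose proof (ch2sh2 (a*x)) as Hh. pose proof (sin2_cos2 (a*x)) as Ht. unfold Rsqr in Ht.
 set (hh1 := ch a) in *. set (gg1 := sh a) in *. set (s1 := sin a) in *. set (c1 := cos a) in *.
 set (hh := ch (a*x)) in *. set (gg := sh (a*x)) in *. set (s := sin (a*x)) in *. set (c := cos (a*x)) in *.
 intros P1 P2. clearbody hh1 gg1 s1 c1 hh gg s c.
 assert (Hid : 2*((hh1*s1 + gg1*c1)*(hh*c) + (hh1*s1 - gg1*c1)*(gg*s) - (s1*c1 + hh1*gg1))
   = -((gg1 * hh + hh1 * gg - (s1 * c + c1 * s)) * (hh1 * hh + gg1 * - gg - (c1 * c - s1 * - s))
       + (gg1 * hh + hh1 * - gg - (s1 * c + c1 * - s)) * (hh1 * hh + gg1 * gg - (c1 * c - s1 * s)))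
     + 2*gg1*hh1*(hh^2-gg^2-1) + 2*s1*c1*(s*s+c*c-1)).
 { ring. }
 rewrite Hh, Ht in Hid. lra.
Qed.

Lemma der_w (f Yf : R -> R) (c t df dY : R) : is_derive f t df -> is_derive Yf t dY ->
  is_derive (fun s => f s + c - Yf s) t (df - dY).
Proof. intros H1 H2.
 replace (df - dY) with (minus (plus df zero) dY) by (unfold minus, plus, opp, zero; simpl; ring).
 apply (is_derive_minus (fun s => f s + c) Yf). apply (is_derive_plus f (fun _ => c)). exact H1.
 apply (@is_derive_const R_AbsRing R_NormedModule). exact H2. Qed.

Lemma der_sq4 (f0 f1 f2 f3 : R -> R) (g0 g1 g2 g3 t : R) :
  is_derive f0 t g0 -> is_derive f1 t g1 -> is_derive f2 t g2 -> is_derive f3 t g3 ->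
  is_derive (fun s => f0 s^2 + f1 s^2 + f2 s^2 + f3 s^2) t (2*(f0 t*g0 + f1 t*g1 + f2 t*g2 + f3 t*g3)).
Proof. intros H0 H1 H2 H3.
 replace (2*(f0 t*g0 + f1 t*g1 + f2 t*g2 + f3 t*g3)) with
   (plus (plus (plus (INR 2 * g0 * f0 t ^ Nat.pred 2) (INR 2 * g1 * f1 t ^ Nat.pred 2))
     (INR 2 * g2 * f2 t ^ Nat.pred 2)) (INR 2 * g3 * f3 t ^ Nat.pred 2)) by (unfold plus; simpl; ring).
 apply (is_derive_plus (fun s => f0 s^2 + f1 s^2 + f2 s^2) (fun s => f3 s ^2)).
 apply (is_derive_plus (fun s => f0 s^2 + f1 s^2) (fun s => f2 s ^2)).
 apply (is_derive_plus (fun s => f0 s^2) (fun s => f1 s ^2)).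
 all: apply is_derive_pow; assumption. Qed.

Lemma der_mexp (E : R -> R) (dE L c : R) : is_derive E c dE ->
  derivable_pt_lim (fun t => E t * exp (L*t)) c (dE * exp (L*c) + E c * (L * exp (L*c))).
Proof. intros H. apply is_derive_Reals.
 assert (He : is_derive (fun t => exp (L*t)) c (L * exp (L*c))) by (auto_derive; [exact I| ring]).
 exact (is_derive_mult E (fun t => exp (L*t)) c dE (L * exp (L*c)) H He Rmult_comm). Qed.

Lemma gron_pos (E dE : R -> R) (L x : R) : 0 < x ->
 (forall t, 0 <= t <= x -> is_derive E t (dE t)) ->
 (forall t, 0 <= t <= x -> dE t <= L * E t) -> E 0 = 0 -> E x <= 0.
Proof.
 intros Hx Hd Hle H0.
 destruct (MVT_cor2 (fun t => E t * exp (-L*t)) (fun t => dE t * exp(-L*t) + E t * (-L * exp(-L*t))) 0 x Hx) as [c [Hc Hc']].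
 { intros c Hc. apply der_mexp. apply Hd. exact Hc. }
 rewrite Rmult_0_r, exp_0, H0 in Hc.
 pose proof (Hle c ltac:(lra)). pose proof (exp_pos (-L*c)). pose proof (exp_pos (-L*x)).
 assert ((dE c * exp (- L * c) + E c * (- L * exp (- L * c))) * (x - 0) <= 0).
 { replace (dE c * exp (- L * c) + E c * (- L * exp (- L * c))) with ((dE c - L * E c) * exp (-L*c)) by ring.
   apply Rmult_le_0_r; [|lra]. apply Rmult_le_0_r; lra. }
 assert (E x * exp (- L * x) <= 0) by lra.
 destruct (Rle_or_lt (E x) 0); auto. nra. Qed.

Lemma gron_neg (E dE : R -> R) (L x : R) : x < 0 ->
 (forall t, x <= t <= 0 -> is_derive E t (dE t)) ->
 (forall t, x <= t <= 0 -> - (L * E t) <= dE t) -> E 0 = 0 -> E x <= 0.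
Proof.
 intros Hx Hd Hle H0.
 destruct (MVT_cor2 (fun t => E t * exp (L*t)) (fun t => dE t * exp(L*t) + E t * (L * exp(L*t))) x 0 Hx) as [c [Hc Hc']].
 { intros c Hc. apply der_mexp. apply Hd. exact Hc. }
 rewrite Rmult_0_r, exp_0, H0 in Hc.
 pose proof (Hle c ltac:(lra)). pose proof (exp_pos (L*c)). pose proof (exp_pos (L*x)).
 assert (0 <= (dE c * exp (L * c) + E c * (L * exp (L * c))) * (0 - x)).
 { replace (dE c * exp (L * c) + E c * (L * exp (L * c))) with ((dE c + L * E c) * exp (L*c)) by ring.
   apply Rmult_le_pos; [|lra]. apply Rmult_le_pos; lra. }
 assert (E x * exp (L * x) <= 0) by lra.
 destruct (Rle_or_lt (E x) 0); auto. nra. Qed.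

Theorem theorem4p2 :
  forall (alpha : R) (rc : R -> R),
    0 < alpha ->
    is_rate_of_change alpha rc ->
    forall x : R, -1 < x < 1 -> rc x < 0.
Proof.
intros alpha rc Ha [Hex [Hode [_ [_ [Hl1 [Hl2 [Hd1 Hd2]]]]]]] x Hx.
set (a := / (sqrt 2 * alpha)).
assert (Hs2 : sqrt 2 * sqrt 2 = 2) by (apply sqrt_sqrt; lra).
assert (Hs2p : 0 < sqrt 2) by (apply sqrt_lt_R0; lra).
assert (Ha0 : 0 < a) by (unfold a; apply Rinv_0_lt_compat; nra).
assert (Ha1 : a * (sqrt 2 * alpha) = 1) by (unfold a; apply Rinv_l; nra).
assert (Ha4 : a^4 * (4 * alpha^4) = 1).
{ assert (H : (a * (sqrt 2 * alpha))^4 = 1) by (rewrite Ha1; ring).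
  replace ((a * (sqrt 2 * alpha))^4) with (a^4 * (sqrt 2 * sqrt 2)^2 * alpha^4) in H by ring.
  rewrite Hs2 in H. lra. }
assert (HK : / alpha ^ 4 = 4 * a ^ 4).
{ rewrite <- (Rmult_1_l (/ alpha^4)), <- Ha4. field. lra. }
set (m := 2 * alpha^3).
assert (Hm : 0 < m) by (unfold m; apply Rmult_lt_0_compat; [lra| apply pow_lt; lra]).
assert (Hode' : forall t, -1 < t < 1 -> Derive_n rc 4 t = -4*a^4*(rc t + m)).
{ intros t Ht. pose proof (Hode t Ht) as H. unfold Rdiv in H.
  assert (H2 : 2 * / alpha = m * / alpha^4) by (unfold m; field; lra).
  rewrite H2, HK in H. lra. }
assert (Hd : forall j t, (j < 4)%nat -> -1 < t < 1 -> is_derive (Derive_n rc j) t (Derive_n rc (S j) t)).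
{ intros j t Hj Ht. apply Derive_correct. apply (Hex (S j) t). lia. exact Ht. }
set (D1 := Derive_n rc 1 0). set (D2 := Derive_n rc 2 0). set (D3 := Derive_n rc 3 0).
set (A0 := rc 0 + m). set (B0 := D2 / (2*a^2)).
set (p0 := (D1/a + D3/(2*a^3))/2). set (q0 := (D1/a - D3/(2*a^3))/2).
set (A1 := a*(p0+q0)). set (B1 := a*(p0-q0)). set (p1 := a*(B0-A0)). set (q1 := a*(A0+B0)).
set (A2 := a*(p1+q1)). set (B2 := a*(p1-q1)). set (p2 := a*(B1-A1)). set (q2 := a*(A1+B1)).
set (A3 := a*(p2+q2)). set (B3 := a*(p2-q2)). set (p3 := a*(B2-A2)). set (q3 := a*(A2+B2)).
set (A4 := a*(p3+q3)). set (B4 := a*(p3-q3)). set (p4 := a*(B3-A3)). set (q4 := a*(A3+B3)).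
pose (w0 := fun t => rc t + m - Y a A0 B0 p0 q0 t).
pose (w1 := fun t => Derive_n rc 1 t + 0 - Y a A1 B1 p1 q1 t).
pose (w2 := fun t => Derive_n rc 2 t + 0 - Y a A2 B2 p2 q2 t).
pose (w3 := fun t => Derive_n rc 3 t + 0 - Y a A3 B3 p3 q3 t).
assert (Hw0 : forall t, -1 < t < 1 -> is_derive w0 t (w1 t)).
{ intros t Ht. unfold w0, w1. replace (Derive_n rc 1 t + 0 - Y a A1 B1 p1 q1 t) with (Derive_n rc 1 t - Y a A1 B1 p1 q1 t) by ring.
  apply der_w. exact (Hd 0%nat t ltac:(lia) Ht). apply Y_der. }
assert (Hw1 : forall t, -1 < t < 1 -> is_derive w1 t (w2 t)).
{ intros t Ht. unfold w1, w2. replace (Derive_n rc 2 t + 0 - Y a A2 B2 p2 q2 t) with (Derive_n rc 2 t - Y a A2 B2 p2 q2 t) by ring.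
  apply der_w. exact (Hd 1%nat t ltac:(lia) Ht). apply Y_der. }
assert (Hw2 : forall t, -1 < t < 1 -> is_derive w2 t (w3 t)).
{ intros t Ht. unfold w2, w3. replace (Derive_n rc 3 t + 0 - Y a A3 B3 p3 q3 t) with (Derive_n rc 3 t - Y a A3 B3 p3 q3 t) by ring.
  apply der_w. exact (Hd 2%nat t ltac:(lia) Ht). apply Y_der. }
assert (HY4 : forall t, Y a A4 B4 p4 q4 t = -4*a^4 * Y a A0 B0 p0 q0 t).
{ intros t. unfold A4, B4, p4, q4, A3, B3, p3, q3, A2, B2, p2, q2, A1, B1, p1, q1.
  clearbody A0 B0 p0 q0. unfold Y. ring. }
assert (Hw3 : forall t, -1 < t < 1 -> is_derive w3 t (-4*a^4 * w0 t)).
{ intros t Ht. unfold w3.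
  replace (-4*a^4 * w0 t) with (Derive_n rc 4 t - Y a A4 B4 p4 q4 t)
    by (rewrite Hode', HY4 by exact Ht; unfold w0; ring).
  apply der_w. exact (Hd 3%nat t ltac:(lia) Ht). apply Y_der. }
pose (E := fun t => w0 t^2 + w1 t^2 + w2 t^2 + w3 t^2).
pose (dE := fun t => 2*(w0 t*w1 t + w1 t*w2 t + w2 t*w3 t + w3 t*(-4*a^4*w0 t))).
set (L := 2 + 4*a^4).
assert (HdE : forall t, -1 < t < 1 -> is_derive E t (dE t)).
{ intros t Ht. apply der_sq4; auto. }
assert (Hup : forall t, dE t <= L * E t).
{ intros t. unfold dE, E, L.
  set (z0 := w0 t). set (z1 := w1 t). set (z2 := w2 t). set (z3 := w3 t).
  assert (0 <= 4*a^4) by (pose proof (pow_lt a 4 Ha0); lra).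
  assert (0 <= 4*a^4*((z0+z3)^2 + z1^2 + z2^2)) by (apply Rmult_le_pos; [lra| pose proof (pow2_ge_0 (z0+z3)); pose proof (pow2_ge_0 z1); pose proof (pow2_ge_0 z2); lra]).
  pose proof (pow2_ge_0 (z0-z1)). pose proof (pow2_ge_0 (z1-z2)). pose proof (pow2_ge_0 (z2-z3)).
  pose proof (pow2_ge_0 z0). pose proof (pow2_ge_0 z3).
  assert (Heq : (2 + 4 * a ^ 4) * (z0 ^ 2 + z1 ^ 2 + z2 ^ 2 + z3 ^ 2) - 2 * (z0 * z1 + z1 * z2 + z2 * z3 + z3 * (-4 * a ^ 4 * z0))
     = (z0-z1)^2 + (z1-z2)^2 + (z2-z3)^2 + z0^2 + z3^2 + 4*a^4*((z0+z3)^2 + z1^2 + z2^2)) by ring.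
  lra. }
assert (Hlo : forall t, - (L * E t) <= dE t).
{ intros t. unfold dE, E, L.
  set (z0 := w0 t). set (z1 := w1 t). set (z2 := w2 t). set (z3 := w3 t).
  assert (0 <= 4*a^4) by (pose proof (pow_lt a 4 Ha0); lra).
  assert (0 <= 4*a^4*((z0-z3)^2 + z1^2 + z2^2)) by (apply Rmult_le_pos; [lra| pose proof (pow2_ge_0 (z0-z3)); pose proof (pow2_ge_0 z1); pose proof (pow2_ge_0 z2); lra]).
  pose proof (pow2_ge_0 (z0+z1)). pose proof (pow2_ge_0 (z1+z2)). pose proof (pow2_ge_0 (z2+z3)).
  pose proof (pow2_ge_0 z0). pose proof (pow2_ge_0 z3).
  assert (Heq : (2 + 4 * a ^ 4) * (z0 ^ 2 + z1 ^ 2 + z2 ^ 2 + z3 ^ 2) + 2 * (z0 * z1 + z1 * z2 + z2 * z3 + z3 * (-4 * a ^ 4 * z0))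
     = (z0+z1)^2 + (z1+z2)^2 + (z2+z3)^2 + z0^2 + z3^2 + 4*a^4*((z0-z3)^2 + z1^2 + z2^2)) by ring.
  lra. }
assert (HE0 : E 0 = 0).
{ assert (e0 : w0 0 = 0) by (unfold w0; rewrite Y0; unfold A0; ring).
  assert (e1 : w1 0 = 0).
  { unfold w1; rewrite Y0. fold D1. unfold A1, p0, q0. field. lra. }
  assert (e2 : w2 0 = 0).
  { unfold w2; rewrite Y0. fold D2. unfold A2, p1, q1, B0. field. lra. }
  assert (e3 : w3 0 = 0).
  { unfold w3; rewrite Y0. fold D3. unfold A3, p2, q2, B1, A1, p0, q0. field. lra. }
  unfold E. rewrite e0, e1, e2, e3. ring. }
assert (Hzero : forall y, -1 < y < 1 -> w0 y = 0 /\ w1 y = 0).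
{ intros y Hy.
  assert (HEy : E y <= 0).
  { destruct (Rtotal_order y 0) as [Hlt | [Heq | Hgt]].
    - apply (gron_neg E dE L y Hlt); auto. intros t Ht. apply HdE. lra.
    - rewrite Heq, HE0. lra.
    - apply (gron_pos E dE L y Hgt); auto. intros t Ht. apply HdE. lra. }
  unfold E in HEy.
  pose proof (pow2_ge_0 (w0 y)). pose proof (pow2_ge_0 (w1 y)). pose proof (pow2_ge_0 (w2 y)). pose proof (pow2_ge_0 (w3 y)).
  split; apply Rsqr_0_uniq; unfold Rsqr; simpl in *; lra. }
assert (Bd1 : Y a A0 B0 p0 q0 1 - m = 0).
{ apply (lim_left1 rc (fun y => Y a A0 B0 p0 q0 y - m)); [| apply Y_cont | exact Hl2].
  intros y Hy. destruct (Hzero y Hy) as [H _]. unfold w0 in H. lra. }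
assert (Bd2 : Y a A0 B0 p0 q0 (-1) - m = 0).
{ apply (lim_rightm1 rc (fun y => Y a A0 B0 p0 q0 y - m)); [| apply Y_cont | exact Hl1].
  intros y Hy. destruct (Hzero y Hy) as [H _]. unfold w0 in H. lra. }
assert (Bd3 : Y a A1 B1 p1 q1 1 - 0 = 0).
{ apply (lim_left1 (Derive rc) (fun y => Y a A1 B1 p1 q1 y - 0)); [| apply Y_cont | exact Hd2].
  intros y Hy. destruct (Hzero y Hy) as [_ H]. unfold w1 in H. change (Derive rc y) with (Derive_n rc 1 y). lra. }
assert (Bd4 : Y a A1 B1 p1 q1 (-1) - 0 = 0).
{ apply (lim_rightm1 (Derive rc) (fun y => Y a A1 B1 p1 q1 y - 0)); [| apply Y_cont | exact Hd1].
  intros y Hy. destruct (Hzero y Hy) as [_ H]. unfold w1 in H. change (Derive rc y) with (Derive_n rc 1 y). lra. }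
assert (Hrc : rc x = Y a A0 B0 p0 q0 x - m).
{ destruct (Hzero x Hx) as [H _]. unfold w0 in H. lra. }
rewrite Y1 in Bd1, Bd3. rewrite Ym1 in Bd2, Bd4.
pose proof (key_ineq a x Ha0 Hx) as Hkey.
assert (Hsh : Rabs (sin (2*a)) < sh (a+a)) by (replace (2*a) with (a+a) by ring; apply sh_gt_abs_sin; lra).
rewrite sh_plus, sin_2a in Hsh. apply Rabs_def2 in Hsh.
pose proof (ch2sh2 a) as Hp1. pose proof (sin2_cos2 a) as Hp2. unfold Rsqr in Hp2.
revert Hrc. unfold Y.
set (h1 := ch a) in *. set (g1 := sh a) in *. set (s1 := sin a) in *. set (c1 := cos a) in *.
set (Cx := ch (a*x) * cos (a*x)) in *. set (Sx := sh (a*x) * sin (a*x)) in *.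
set (Px := ch (a*x) * sin (a*x)) in *. set (Qx := sh (a*x) * cos (a*x)) in *.
intros Hrc.
assert (O1 : p0*(h1*s1) + q0*(g1*c1) = 0) by lra.
assert (O2 : (p0+q0)*(h1*c1) + (p0-q0)*(g1*s1) = 0).
{ assert (a * ((p0+q0)*(h1*c1) + (p0-q0)*(g1*s1)) = 0).
  { unfold A1, B1 in Bd3, Bd4. lra. }
  apply Rmult_integral in H. destruct H; [lra | exact H]. }
assert (E1 : A0*(h1*c1) + B0*(g1*s1) = m) by lra.
assert (E2 : (B0-A0)*(h1*s1) + (A0+B0)*(g1*c1) = 0).
{ assert (a * ((B0-A0)*(h1*s1) + (A0+B0)*(g1*c1)) = 0).
  { unfold p1, q1 in Bd3, Bd4. lra. }
  apply Rmult_integral in H. destruct H; [lra | exact H]. }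
assert (Hdo : s1*c1*(h1^2-g1^2) - h1*g1*(s1*s1+c1*c1) = s1*c1 - h1*g1) by (rewrite Hp1, Hp2; ring).
assert (Hde : s1*c1*(h1^2-g1^2) + h1*g1*(s1*s1+c1*c1) = s1*c1 + h1*g1) by (rewrite Hp1, Hp2; ring).
assert (Hp0 : p0 * (s1*c1 - h1*g1) = 0).
{ rewrite <- Hdo. replace (p0 * (s1 * c1 * (h1 ^ 2 - g1 ^ 2) - h1 * g1 * (s1 * s1 + c1 * c1)))
    with ((h1*c1 - g1*s1)*(p0*(h1*s1) + q0*(g1*c1)) - g1*c1*((p0+q0)*(h1*c1) + (p0-q0)*(g1*s1))) by ring.
  rewrite O1, O2. ring. }
assert (Hq0 : q0 * (s1*c1 - h1*g1) = 0).
{ rewrite <- Hdo. replace (q0 * (s1 * c1 * (h1 ^ 2 - g1 ^ 2) - h1 * g1 * (s1 * s1 + c1 * c1)))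
    with (-(h1*c1 + g1*s1)*(p0*(h1*s1) + q0*(g1*c1)) + h1*s1*((p0+q0)*(h1*c1) + (p0-q0)*(g1*s1))) by ring.
  rewrite O1, O2. ring. }
assert (Hp00 : p0 = 0) by (apply Rmult_integral in Hp0; destruct Hp0; [auto | lra]).
assert (Hq00 : q0 = 0) by (apply Rmult_integral in Hq0; destruct Hq0; [auto | lra]).
assert (HA : (s1*c1 + h1*g1) * A0 = m * (h1*s1 + g1*c1)).
{ rewrite <- Hde. replace ((s1 * c1 * (h1 ^ 2 - g1 ^ 2) + h1 * g1 * (s1 * s1 + c1 * c1)) * A0)
   with ((h1*s1 + g1*c1)*(A0*(h1*c1) + B0*(g1*s1)) - g1*s1*((B0-A0)*(h1*s1) + (A0+B0)*(g1*c1))) by ring.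
  rewrite E1, E2. ring. }
assert (HB : (s1*c1 + h1*g1) * B0 = m * (h1*s1 - g1*c1)).
{ rewrite <- Hde. replace ((s1 * c1 * (h1 ^ 2 - g1 ^ 2) + h1 * g1 * (s1 * s1 + c1 * c1)) * B0)
   with (h1*c1*((B0-A0)*(h1*s1) + (A0+B0)*(g1*c1)) - (g1*c1 - h1*s1)*(A0*(h1*c1) + B0*(g1*s1))) by ring.
  rewrite E1, E2. ring. }
assert (Hfin : (s1*c1 + h1*g1) * rc x = m * ((h1*s1 + g1*c1)*Cx + (h1*s1 - g1*c1)*Sx - (s1*c1 + h1*g1))).
{ rewrite Hrc, Hp00, Hq00.
  replace ((s1 * c1 + h1 * g1) * (A0 * Cx + B0 * Sx + 0 * Px + 0 * Qx - m))
    with (((s1*c1 + h1*g1) * A0) * Cx + ((s1*c1 + h1*g1) * B0) * Sx - (s1*c1+h1*g1)*m) by ring.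
  rewrite HA, HB. ring. }
assert (Hdet : 0 < s1*c1 + h1*g1) by lra.
destruct (Rlt_or_le (rc x) 0) as [Hneg|Hpos]; [exact Hneg|].
assert (0 <= (s1*c1 + h1*g1) * rc x) by (apply Rmult_le_pos; lra).
assert (m * ((h1*s1 + g1*c1)*Cx + (h1*s1 - g1*c1)*Sx - (s1*c1 + h1*g1)) < 0)
by (rewrite <- (Rmult_0_r m); apply Rmult_lt_compat_l; lra).
lra.
Qed.
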